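(* Let $r,u>0$, $0<\alpha\le 2$, $\eta>0$ and $s\in\mathbb{C}\setminus\{0\}$. Then there exists $M>0$ such that \[ F^{\alpha}_{s,r}\circ F^{\alpha}_{us,u}=F^{\alpha}_{us,ur}\quad\text{on }\Gamma_{\eta,M} \] (all three functions, and the composition, being well defined there).
   Context: Branch conventions: for $w\in\mathbb{C}\setminus[0,\infty)$ and $p\in\{\alpha,1/\alpha\}$, $w^{p}:=e^{p\log_{(1)}w}$, where $\log_{(1)}$ is the branch of the logarithm with imaginary part in $(0,2\pi)$; for $w\in\mathbb{C}\setminus(-\infty,0]$, $w^{1/r}:=e^{\frac1r\operatorname{Log}w}$ with the principal logarithm (imaginary part in $(-\pi,\pi)$); $r^{1/\alpha}>0$ denotes the positive root. For $\eta,M>0$ let $\Gamma_{\eta,M}=\{z\in\mathbb{C}:\operatorname{Im}z>M,\ \operatorname{Im}z>\eta|\operatorname{Re}z|\}$. For $0<\alpha\le2$, $r>0$, $s\in\mathbb{C}\setminus\{0\}$ define \[ G^{\alpha}_{s,r}(z)=-r^{1/\alpha}\left(\frac{1-\big(1-s(-\tfrac1z)^{\alpha}\big)^{1/r}}{s}\right)^{1/\alpha}. \] For every $\eta>0$ there is $M>0$ such that on $\Gamma_{\eta,M}$ every power in this formula is applied to a point in the domain of its branch, so $G^\alpha_{s,r}$ is analytic and nonvanishing there; set $F^{\alpha}_{s,r}:=1/G^{\alpha}_{s,r}$ on such a domain. *)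

(* Defs.v *)
From Stdlib Require Import Reals Lra.
Open Scope R_scope.

Definition CC : Type := (R * R)%type.
Definition Re (z : CC) : R := fst z.
Definition Im (z : CC) : R := snd z.
Definition RtoC (x : R) : CC := (x, 0).
Definition C0 : CC := (0, 0).
Definition C1 : CC := (1, 0).
Definition Cadd (z w : CC) : CC := (Re z + Re w, Im z + Im w).
Definition Copp (z : CC) : CC := (- Re z, - Im z).
Definition Csub (z w : CC) : CC := Cadd z (Copp w).
Definition Cmul (z w : CC) : CC :=
  (Re z * Re w - Im z * Im w, Re z * Im w + Im z * Re w).
Definition Cnorm2 (z : CC) : R := Re z * Re z + Im z * Im z.
Definition Cinv (z : CC) : CC := (Re z / Cnorm2 z, - Im z / Cnorm2 z).
Definition Cdiv (z w : CC) : CC := Cmul z (Cinv w).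
Definition Cabs (z : CC) : R := sqrt (Cnorm2 z).
Definition Cexp (z : CC) : CC := (exp (Re z) * cos (Im z), exp (Re z) * sin (Im z)).

(** Principal argument, with values in (-PI, PI] (and 0 at 0). *)
Definition Arg (z : CC) : R :=
  let x := Re z in let y := Im z in
  if Rlt_dec 0 x then atan (y / x)
  else if Rlt_dec x 0 then
         (if Rle_dec 0 y then atan (y / x) + PI else atan (y / x) - PI)
  else if Rlt_dec 0 y then PI / 2
  else if Rlt_dec y 0 then - (PI / 2)
  else 0.

(** Principal logarithm Log (imaginary part in (-PI, PI) on CC \ (-oo,0]). *)
Definition Clog_princ (w : CC) : CC := (ln (Cabs w), Arg w).

(** The branch log_(1): imaginary part in (0, 2 PI) on CC \ [0, +oo). *)
Definition arg1 (w : CC) : R := if Rlt_dec 0 (Arg w) then Arg w else Arg w + 2 * PI.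
Definition Clog1 (w : CC) : CC := (ln (Cabs w), arg1 w).

(* w^p := exp (p log_(1) w), used for p in {alpha, 1/alpha} on CC \ [0,oo) *)
Definition cpow1 (w : CC) (p : R) : CC := Cexp (Cmul (RtoC p) (Clog1 w)).
(* w^p := exp (p Log w), used for p = 1/r on CC \ (-oo,0] *)
Definition cpowP (w : CC) (p : R) : CC := Cexp (Cmul (RtoC p) (Clog_princ w)).

Definition not_in_nonneg_axis (w : CC) : Prop := ~ (Im w = 0 /\ 0 <= Re w).
Definition not_in_nonpos_axis (w : CC) : Prop := ~ (Im w = 0 /\ Re w <= 0).

Definition G_w1 (z : CC) : CC := Copp (Cinv z).
Definition G_w2 (alpha : R) (s z : CC) : CC :=
  Csub C1 (Cmul s (cpow1 (G_w1 z) alpha)).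
Definition G_w3 (alpha r : R) (s z : CC) : CC :=
  Cdiv (Csub C1 (cpowP (G_w2 alpha s z) (1 / r))) s.

Definition G (alpha : R) (s : CC) (r : R) (z : CC) : CC :=
  Copp (Cmul (RtoC (Rpower r (1 / alpha))) (cpow1 (G_w3 alpha r s z) (1 / alpha))).

Definition F (alpha : R) (s : CC) (r : R) (z : CC) : CC := Cinv (G alpha s r z).

(** F^alpha_{s,r} is well defined at z: every power is applied to a point of
    the domain of its branch, and G is nonzero. *)
Definition F_welldef (alpha : R) (s : CC) (r : R) (z : CC) : Prop :=
  z <> C0 /\
  not_in_nonneg_axis (G_w1 z) /\
  not_in_nonpos_axis (G_w2 alpha s z) /\
  not_in_nonneg_axis (G_w3 alpha r s z) /\
  G alpha s r z <> C0.

Definition Gamma (eta M : R) (z : CC) : Prop := M < Im z /\ eta * Rabs (Re z) < Im z.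

(* Main.v *)
Require Import Defs.
From Stdlib Require Import Reals Lra Psatz.
Open Scope R_scope.

Lemma CC_eq (a b : CC) : Re a = Re b -> Im a = Im b -> a = b.
Proof. destruct a, b; unfold Re, Im; simpl; intros; subst; reflexivity. Qed.

Lemma Cnorm2_pos (z : CC) : z <> C0 -> 0 < Cnorm2 z.
Proof.
  destruct z as [x y]; unfold Cnorm2, Re, Im, C0; simpl; intros H.
  destruct (Req_dec x 0); destruct (Req_dec y 0); subst; try (exfalso; apply H; reflexivity); nra.
Qed.

Lemma Cnorm2_ge0 (z : CC) : 0 <= Cnorm2 z.
Proof. unfold Cnorm2; nra. Qed.

Lemma Cabs_ge0 z : 0 <= Cabs z.
Proof. apply sqrt_pos. Qed.

Lemma Cabs_pos z : z <> C0 -> 0 < Cabs z.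
Proof. intros H; apply sqrt_lt_R0, Cnorm2_pos, H. Qed.

Lemma Cabs_sq z : Cabs z * Cabs z = Cnorm2 z.
Proof. apply sqrt_sqrt, Cnorm2_ge0. Qed.

Lemma Re_le_Cabs z : Rabs (Re z) <= Cabs z.
Proof.
  rewrite <- sqrt_Rsqr_abs. apply sqrt_le_1_alt. unfold Rsqr, Cnorm2. nra.
Qed.

Lemma Im_le_Cabs z : Rabs (Im z) <= Cabs z.
Proof.
  rewrite <- sqrt_Rsqr_abs. apply sqrt_le_1_alt. unfold Rsqr, Cnorm2. nra.
Qed.

Lemma Cabs_le_sum z : Cabs z <= Rabs (Re z) + Rabs (Im z).
Proof.
  unfold Cabs. rewrite <- (sqrt_Rsqr (Rabs (Re z) + Rabs (Im z))).
  2: { pose proof (Rabs_pos (Re z)); pose proof (Rabs_pos (Im z)); lra. }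
  apply sqrt_le_1_alt. unfold Rsqr, Cnorm2.
  pose proof (Rabs_pos (Re z)); pose proof (Rabs_pos (Im z)).
  assert (Rabs (Re z) * Rabs (Re z) = Re z * Re z) by (rewrite <- Rabs_mult; apply Rabs_pos_eq; nra).
  assert (Rabs (Im z) * Rabs (Im z) = Im z * Im z) by (rewrite <- Rabs_mult; apply Rabs_pos_eq; nra).
  nra.
Qed.

Lemma Cabs_mul a b : Cabs (Cmul a b) = Cabs a * Cabs b.
Proof.
  unfold Cabs. rewrite <- sqrt_mult by apply Cnorm2_ge0. f_equal.
  unfold Cnorm2, Cmul, Re, Im; simpl; ring.
Qed.

Lemma Cabs_inv b : b <> C0 -> Cabs (Cinv b) = / Cabs b.
Proof.
  intros H. pose proof (Cnorm2_pos b H). unfold Cabs. rewrite <- sqrt_inv. f_equal.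
  destruct b as [x y]. unfold Cnorm2, Cinv, Re, Im in *; simpl in *. unfold Cnorm2, Re, Im; simpl. field. lra.
Qed.

Lemma Cabs_div a b : b <> C0 -> Cabs (Cdiv a b) = Cabs a / Cabs b.
Proof. intros H. unfold Cdiv. rewrite Cabs_mul, Cabs_inv by exact H. reflexivity. Qed.

Lemma Cmul_RtoC a z : Cmul (RtoC a) z = (a * Re z, a * Im z).
Proof. apply CC_eq; unfold Cmul, RtoC, Re, Im; simpl; ring. Qed.

Lemma Cabs_Cexp v : Cabs (Cexp v) = exp (Re v).
Proof.
  unfold Cabs, Cnorm2, Cexp, Re, Im; simpl.
  replace (exp (fst v) * cos (snd v) * (exp (fst v) * cos (snd v)) +
           exp (fst v) * sin (snd v) * (exp (fst v) * sin (snd v)))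
    with (exp (fst v) * exp (fst v)).
  - apply sqrt_square. left; apply exp_pos.
  - pose proof (sin2_cos2 (snd v)). unfold Rsqr in *. nra.
Qed.

Lemma Cexp_ne0 v : Cexp v <> C0.
Proof.
  intros H. pose proof (Cabs_Cexp v). rewrite H in H0.
  unfold Cabs, Cnorm2, C0, Re, Im in H0; simpl in H0.
  replace (0*0+0*0) with 0 in H0 by ring. rewrite sqrt_0 in H0.
  pose proof (exp_pos (fst v)); lra.
Qed.

Lemma Copp_Cexp_ne0 v : Copp (Cexp v) <> C0.
Proof.
  intros H. apply (Cexp_ne0 v). destruct (Cexp v) as [a b].
  unfold Copp, C0, Re, Im in *; simpl in *. injection H; intros.
  f_equal; lra.
Qed.

Lemma Cexp_add v w : Cmul (Cexp v) (Cexp w) = Cexp (Re v + Re w, Im v + Im w).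
Proof.
  apply CC_eq; unfold Cmul, Cexp, Re, Im; simpl;
  rewrite exp_plus; [rewrite cos_plus | rewrite sin_plus]; ring.
Qed.

Lemma scal_Cexp c v : 0 < c -> Cmul (RtoC c) (Cexp v) = Cexp (ln c + Re v, Im v).
Proof.
  intros Hc. rewrite Cmul_RtoC. apply CC_eq; unfold Cexp, Re, Im; simpl;
  rewrite exp_plus, exp_ln by exact Hc; ring.
Qed.

Lemma Cinv_Cinv z : z <> C0 -> Cinv (Cinv z) = z.
Proof.
  intros H. pose proof (Cnorm2_pos z H).
  destruct z as [x y]; unfold Cinv, Cnorm2, Re, Im in *; simpl in *; unfold Cnorm2, Re, Im; simpl.
  assert (H1 : x / (x * x + y * y) * (x / (x * x + y * y)) +
     - y / (x * x + y * y) * (- y / (x * x + y * y)) = / (x*x+y*y)) by (field; lra).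
  rewrite H1. apply CC_eq; unfold Re, Im; simpl; field; lra.
Qed.

Lemma Copp_Copp z : Copp (Copp z) = z.
Proof. apply CC_eq; unfold Copp, Re, Im; simpl; ring. Qed.

Lemma sqrt_1_plus_sq x y : x <> 0 ->
  sqrt (1 + (y / x)²) = sqrt (x*x + y*y) / Rabs x.
Proof.
  intros Hx. assert (0 < Rabs x) by (apply Rabs_pos_lt; exact Hx).
  rewrite <- (sqrt_Rsqr (Rabs x)) by lra.
  rewrite <- sqrt_div. 2: nra. 2: unfold Rsqr; nra.
  f_equal. unfold Rsqr. rewrite <- Rabs_mult, Rabs_pos_eq by nra. field. exact Hx.
Qed.

Lemma Arg_polar z : z <> C0 ->
  Cabs z * cos (Arg z) = Re z /\ Cabs z * sin (Arg z) = Im z.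
Proof.
  intros Hz. pose proof (Cabs_pos z Hz) as HS.
  destruct z as [x y]. unfold Cabs, Cnorm2, Arg, Re, Im in *; simpl in *.
  destruct (Rlt_dec 0 x) as [Hx|Hx].
  - rewrite cos_atan, sin_atan, sqrt_1_plus_sq by lra. rewrite Rabs_pos_eq by lra.
    split; field; lra.
  - destruct (Rlt_dec x 0) as [Hx'|Hx'].
    + assert (cos (atan (y/x) + PI) = - cos (atan (y/x))) by apply neg_cos.
      assert (sin (atan (y/x) + PI) = - sin (atan (y/x))) by apply neg_sin.
      assert (cos (atan (y/x) - PI) = - cos (atan (y/x))).
      { rewrite cos_minus, cos_PI, sin_PI; ring. }
      assert (sin (atan (y/x) - PI) = - sin (atan (y/x))).
      { rewrite sin_minus, cos_PI, sin_PI; ring. }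
      destruct (Rle_dec 0 y);
        [rewrite H, H0 | rewrite H1, H2]; rewrite cos_atan, sin_atan, sqrt_1_plus_sq by lra;
        rewrite Rabs_left by lra; split; field; lra.
    + assert (x = 0) by lra. subst x.
      assert (E : sqrt (0 * 0 + y * y) = Rabs y).
      { rewrite <- sqrt_Rsqr_abs. f_equal. unfold Rsqr; ring. }
      rewrite E in *.
      destruct (Rlt_dec 0 y).
      * rewrite cos_PI2, sin_PI2, Rabs_pos_eq by lra. split; ring.
      * destruct (Rlt_dec y 0).
        -- rewrite cos_neg, sin_neg, cos_PI2, sin_PI2, Rabs_left by lra. split; ring.
        -- exfalso. apply Hz. unfold C0. f_equal; lra.
Qed.

Lemma atan_nonpos q : q <= 0 -> atan q <= 0.
Proof.
  intros H. destruct (Req_dec q 0). subst; rewrite atan_0; lra.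
  left. rewrite <- atan_0. apply atan_increasing; lra.
Qed.

Lemma atan_pos q : 0 < q -> 0 < atan q.
Proof. intros H. rewrite <- atan_0. apply atan_increasing; lra. Qed.

Lemma Arg_range z : - PI < Arg z <= PI.
Proof.
  pose proof PI_RGT_0.
  destruct z as [x y]. unfold Arg, Re, Im; simpl.
  destruct (Rlt_dec 0 x).
  - pose proof (atan_bound (y/x)). lra.
  - destruct (Rlt_dec x 0).
    + pose proof (atan_bound (y/x)). destruct (Rle_dec 0 y).
      * assert (y / x <= 0).
        { unfold Rdiv. assert (/ x < 0) by (apply Rinv_lt_0_compat; lra). nra. }
        pose proof (atan_nonpos _ H1). lra.
      * assert (0 < y / x).
        { unfold Rdiv. assert (/ x < 0) by (apply Rinv_lt_0_compat; lra). nra. }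
        pose proof (atan_pos _ H1). lra.
    + destruct (Rlt_dec 0 y). lra. destruct (Rlt_dec y 0); lra.
Qed.

Lemma sin_zero_small d : - PI < d < PI -> sin d = 0 -> d = 0.
Proof.
  intros [H1 H2] H. destruct (Rtotal_order d 0) as [Hd|[Hd|Hd]]; auto.
  - pose proof (sin_lt_0_var d H1 Hd). lra.
  - pose proof (sin_gt_0 d Hd H2). lra.
Qed.

Lemma angle_uniq a b : - PI < a <= PI -> - PI < b <= PI ->
  cos a = cos b -> sin a = sin b -> a = b.
Proof.
  intros Ha Hb Hc Hs.
  assert (cos (a - b) = 1).
  { rewrite cos_minus, Hc, Hs. pose proof (sin2_cos2 b). unfold Rsqr in *. lra. }
  replace (a - b) with (2 * ((a-b)/2)) in H by field.
  rewrite cos_2a_sin in H.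
  assert (sin ((a-b)/2) = 0) by nra.
  apply sin_zero_small in H0. lra. lra.
Qed.

Lemma Cabs_polar rho th : 0 < rho -> Cabs (rho * cos th, rho * sin th) = rho.
Proof.
  intros H. unfold Cabs, Cnorm2, Re, Im; simpl.
  replace (rho * cos th * (rho * cos th) + rho * sin th * (rho * sin th)) with (rho*rho).
  apply sqrt_square; lra. pose proof (sin2_cos2 th). unfold Rsqr in *. nra.
Qed.

Lemma polar_ne0 rho th : 0 < rho -> (rho * cos th, rho * sin th) <> C0.
Proof.
  intros H E. pose proof (Cabs_polar rho th H). rewrite E in H0.
  unfold Cabs, Cnorm2, C0, Re, Im in H0; simpl in H0.
  replace (0*0+0*0) with 0 in H0 by ring. rewrite sqrt_0 in H0. lra.
Qed.

Lemma Arg_uniq rho th : 0 < rho -> - PI < th <= PI ->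
  Arg (rho * cos th, rho * sin th) = th.
Proof.
  intros H Hth. pose proof (Arg_polar _ (polar_ne0 rho th H)) as [H1 H2].
  rewrite Cabs_polar in H1, H2 by exact H. unfold Re, Im in *; simpl in *.
  apply angle_uniq; auto. apply Arg_range.
  apply (Rmult_eq_reg_l rho); lra. apply (Rmult_eq_reg_l rho); lra.
Qed.

Lemma arg1_uniq rho th : 0 < rho -> 0 < th < 2 * PI ->
  arg1 (rho * cos th, rho * sin th) = th.
Proof.
  intros H Hth. unfold arg1.
  destruct (Rle_dec th PI).
  - rewrite Arg_uniq by (auto; lra). destruct (Rlt_dec 0 th); lra.
  - assert (E : (rho * cos th, rho * sin th) = (rho * cos (th - 2*PI), rho * sin (th - 2*PI))).
    { rewrite cos_minus, sin_minus, cos_2PI, sin_2PI. f_equal; ring. }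
    rewrite E, Arg_uniq by (auto; lra). destruct (Rlt_dec 0 (th - 2*PI)); lra.
Qed.

Lemma Clog_princ_Cexp v : - PI < Im v <= PI -> Clog_princ (Cexp v) = v.
Proof.
  intros H. unfold Clog_princ. rewrite Cabs_Cexp, ln_exp.
  unfold Cexp. rewrite Arg_uniq by (auto; apply exp_pos).
  destruct v; reflexivity.
Qed.

Lemma Clog1_Cexp v : 0 < Im v < 2 * PI -> Clog1 (Cexp v) = v.
Proof.
  intros H. unfold Clog1. rewrite Cabs_Cexp, ln_exp.
  unfold Cexp. rewrite arg1_uniq by (auto; apply exp_pos).
  destruct v; reflexivity.
Qed.

Lemma Cexp_Clog_princ z : z <> C0 -> Cexp (Clog_princ z) = z.
Proof.
  intros H. pose proof (Arg_polar z H) as [H1 H2]. pose proof (Cabs_pos z H).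
  unfold Cexp, Clog_princ, Re, Im; simpl. rewrite exp_ln by lra.
  apply CC_eq; unfold Re, Im in *; simpl; lra.
Qed.

Lemma Cexp_Clog1 z : z <> C0 -> Cexp (Clog1 z) = z.
Proof.
  intros H. pose proof (Arg_polar z H) as [H1 H2]. pose proof (Cabs_pos z H).
  unfold Cexp, Clog1, arg1, Re, Im; simpl. rewrite exp_ln by lra.
  destruct (Rlt_dec 0 (Arg z));
  [| rewrite cos_plus, sin_plus, cos_2PI, sin_2PI];
  apply CC_eq; unfold Re, Im in *; simpl; nra.
Qed.

Lemma cpowP_Cexp v p : - PI < Im v <= PI -> cpowP (Cexp v) p = Cexp (p * Re v, p * Im v).
Proof. intros H. unfold cpowP. rewrite Clog_princ_Cexp by exact H. rewrite Cmul_RtoC. reflexivity. Qed.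

Lemma cpow1_Cexp v p : 0 < Im v < 2 * PI -> cpow1 (Cexp v) p = Cexp (p * Re v, p * Im v).
Proof. intros H. unfold cpow1. rewrite Clog1_Cexp by exact H. rewrite Cmul_RtoC. reflexivity. Qed.

Lemma Cexp_not_nonneg v : 0 < Im v < 2 * PI -> not_in_nonneg_axis (Cexp v).
Proof.
  intros H [H1 H2]. unfold Cexp, Re, Im in *; simpl in *.
  pose proof (exp_pos (fst v)).
  assert (sin (snd v) = 0) by (apply (Rmult_eq_reg_l (exp (fst v))); lra).
  destruct (Rtotal_order (snd v) PI) as [h|[h|h]].
  - pose proof (sin_gt_0 (snd v)). lra.
  - rewrite h, cos_PI in H2. lra.
  - pose proof (sin_lt_0 (snd v)). lra.
Qed.

Lemma Cexp_not_nonpos v : Rabs (Im v) <= 1/2 -> not_in_nonpos_axis (Cexp v).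
Proof.
  intros H [H1 H2]. unfold Cexp, Re, Im in *; simpl in *.
  pose proof (exp_pos (fst v)). pose proof PI2_1.
  assert (0 < cos (snd v)) by (revert H; split_Rabs; intros; apply cos_gt_0; lra).
  nra.
Qed.

Lemma sin_lb_poly a : sin_lb a = a - a^3/6 + a^5/120 - a^7/5040.
Proof. unfold sin_lb, sin_approx, sin_term. simpl. field. Qed.

Lemma sin_lower a : 0 <= a <= 1 -> a - a^3/6 <= sin a.
Proof.
  intros H. pose proof PI2_1. destruct (SIN a) as [H1 _]; try lra.
  rewrite sin_lb_poly in H1.
  assert (a^7/5040 <= a^5/120).
  { assert (a^7 <= a^5). { replace (a^7) with (a^5 * (a*a)) by ring.
      assert (0 <= a^5) by (apply pow_le; lra).
      rewrite <- (Rmult_1_r (a^5)) at 2. apply Rmult_le_compat_l; nra. }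
    assert (0 <= a^7) by (apply pow_le; lra). lra. }
  lra.
Qed.

Lemma sin_le_id a : 0 <= a -> sin a <= a.
Proof. intros H. destruct (Req_dec a 0). subst; rewrite sin_0; lra. left; apply sin_lt_x; lra. Qed.

Lemma abs_sin_le x : Rabs (sin x) <= Rabs x.
Proof.
  pose proof PI2_1.
  assert (forall a, 0 <= a -> Rabs (sin a) <= a).
  { intros a Ha. destruct (Rle_dec a 1).
    - pose proof (sin_le_id a Ha). pose proof (sin_lower a).
      assert (0 <= a^3/6 <= a) by (simpl; split; nra).
      apply Rabs_le; lra.
    - pose proof (SIN_bound a). apply Rabs_le; lra. }
  destruct (Rle_dec 0 x). rewrite (Rabs_pos_eq x) by lra. auto.
  assert (Rabs (sin (-x)) <= -x) by (apply H0; lra). rewrite sin_neg, Rabs_Ropp in H1.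
  rewrite (Rabs_left x) by lra. lra.
Qed.

Lemma sin_half_lt d : 0 < d <= 1 -> d / 2 < sin d.
Proof.
  intros H. pose proof (sin_lower d). assert (d^3/6 < d/2).
  { simpl. assert (d*d <= 1) by nra. assert (d*(d*d) <= d) by nra. lra. } lra.
Qed.

Lemma small_angle psi d : - (PI/2) < psi < PI/2 -> 0 < d <= 1 ->
  Rabs (sin psi) <= d / 2 -> Rabs psi < d.
Proof.
  intros Hp Hd Hs. pose proof PI2_1. pose proof (sin_half_lt d Hd).
  apply Rabs_def1.
  - destruct (Rlt_dec psi d); auto. exfalso.
    assert (sin d <= sin psi).
    { destruct (Req_dec psi d). subst; lra. left; apply sin_increasing_1; lra. }
    revert Hs; split_Rabs; intros; lra.
  - destruct (Rlt_dec (-d) psi); auto. exfalso.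
    assert (sin psi <= sin (-d)).
    { destruct (Req_dec psi (-d)). subst; lra. left; apply sin_increasing_1; lra. }
    rewrite sin_neg in H1. revert Hs; split_Rabs; intros; lra.
Qed.

Lemma exp_bounds x : Rabs x <= 1/2 ->
  1 + x <= exp x /\ exp x <= 1 + x + 2 * (x * x).
Proof.
  intros H. assert (Hx : -1/2 <= x <= 1/2) by (revert H; split_Rabs; intros; lra).
  split. apply exp_ineq1_le.
  pose proof (exp_ineq1_le (-x)). pose proof (exp_pos x).
  assert (exp x * exp (-x) = 1) by (rewrite <- exp_plus; replace (x + -x) with 0 by ring; apply exp_0).
  assert (exp x * (1 - x) <= 1) by nra.
  assert (1 <= (1 - x) * (1 + x + 2 * (x*x))) by nra.
  nra.
Qed.

Lemma cos_bound y : 0 <= 1 - cos y <= y * y / 2.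
Proof.
  split. pose proof (COS_bound y); lra.
  replace y with (2 * (y/2)) at 1 by field. rewrite cos_2a_sin.
  pose proof (abs_sin_le (y/2)).
  assert (sin (y/2) * sin (y/2) <= (y/2) * (y/2)).
  { assert (Rabs (sin (y/2)) * Rabs (sin (y/2)) <= Rabs (y/2) * Rabs (y/2)).
    { apply Rmult_le_compat; auto using Rabs_pos. }
    rewrite <- !Rabs_mult in H0. rewrite !Rabs_pos_eq in H0 by nra. exact H0. }
  nra.
Qed.

Lemma sin_minus_id y : Rabs y <= 1/2 -> Rabs (sin y - y) <= y * y.
Proof.
  intros H.
  assert (forall a, 0 <= a <= 1/2 -> Rabs (sin a - a) <= a * a).
  { intros a Ha. pose proof (sin_le_id a). pose proof (sin_lower a).
    assert (a^3/6 <= a*a) by (simpl; nra). apply Rabs_le; lra. }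
  destruct (Rle_dec 0 y).
  - apply H0. revert H; split_Rabs; lra.
  - assert (Rabs (sin (-y) - -y) <= -y * -y) by (apply H0; revert H; split_Rabs; lra).
    rewrite sin_neg in H1. replace (- sin y - - y) with (- (sin y - y)) in H1 by ring.
    rewrite Rabs_Ropp in H1. lra.
Qed.

Lemma ln_bounds x : 0 < x -> 1 - / x <= ln x <= x - 1.
Proof.
  intros H. split.
  - pose proof (exp_ineq1_le (ln (/ x))). rewrite exp_ln in H0 by (apply Rinv_0_lt_compat; lra).
    rewrite ln_Rinv in H0 by lra. lra.
  - pose proof (exp_ineq1_le (ln x)). rewrite exp_ln in H0 by lra. lra.
Qed.

Lemma Rem_re x y : Rabs x <= 1/2 -> Rabs y <= 1/2 ->
  Rabs (exp x * cos y - 1 - x) <= 2 * (x*x + y*y).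
Proof.
  intros Hx Hy. destruct (exp_bounds x Hx). pose proof (cos_bound y).
  assert (exp x <= 2) by (revert Hx; split_Rabs; intros; nra).
  pose proof (exp_pos x).
  assert (0 <= exp x * (1 - cos y) <= y * y) by nra.
  replace (exp x * cos y - 1 - x) with ((exp x - 1 - x) - exp x * (1 - cos y)) by ring.
  apply Rabs_le; nra.
Qed.

Lemma Rem_im x y : Rabs x <= 1/2 -> Rabs y <= 1/2 ->
  Rabs (exp x * sin y - y) <= 2 * (x*x + y*y).
Proof.
  intros Hx Hy. destruct (exp_bounds x Hx). pose proof (sin_minus_id y Hy).
  pose proof (abs_sin_le y).
  assert (Rabs (exp x - 1) <= 2 * Rabs x) by (revert Hx; split_Rabs; intros; nra).
  assert (Rabs ((exp x - 1) * sin y) <= x*x + y*y).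
  { rewrite Rabs_mult.
    assert (Rabs (exp x - 1) * Rabs (sin y) <= (2 * Rabs x) * Rabs y)
      by (apply Rmult_le_compat; auto using Rabs_pos).
    assert (2 * Rabs x * Rabs y <= x*x + y*y).
    { pose proof (Rabs_pos x). pose proof (Rabs_pos y).
      assert (Rabs x * Rabs x = x * x) by (rewrite <- Rabs_mult; apply Rabs_pos_eq; nra).
      assert (Rabs y * Rabs y = y * y) by (rewrite <- Rabs_mult; apply Rabs_pos_eq; nra).
      pose proof (Rle_0_sqr (Rabs x - Rabs y)). unfold Rsqr in *. nra. }
    lra. }
  replace (exp x * sin y - y) with ((exp x - 1) * sin y + (sin y - y)) by ring.
  pose proof (Rabs_triang ((exp x - 1) * sin y) (sin y - y)). nra.
Qed.

Lemma ne0_comp (z : CC) : z <> C0 -> Re z * Re z + Im z * Im z <> 0.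
Proof. intros H. pose proof (Cnorm2_pos z H). unfold Cnorm2 in *. lra. Qed.

Lemma alg1 (s B : CC) (u : R) : s <> C0 -> u <> 0 ->
  Csub Defs.C1 (Cmul s (Cmul (RtoC u) (Cdiv (Csub Defs.C1 B) (Cmul (RtoC u) s)))) = B.
Proof.
  intros Hs Hu. pose proof (ne0_comp s Hs).
  destruct s as [s1 s2], B as [b1 b2]. unfold Re, Im in *; simpl in *.
  apply CC_eq; unfold Csub, Cadd, Copp, Defs.C1, Cmul, Cdiv, Cinv, Cnorm2, RtoC, Re, Im; simpl;
  field; (replace (u * s1 * (u * s1) + u * s2 * (u * s2)) with ((u*u)*(s1*s1+s2*s2)) by ring;
    apply Rmult_integral_contrapositive_currified; auto;
    intro HH; apply Rmult_integral in HH; tauto).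
Qed.

Lemma alg2 (s A : CC) (u : R) : s <> C0 -> u <> 0 ->
  Cdiv A s = Cmul (RtoC u) (Cdiv A (Cmul (RtoC u) s)).
Proof.
  intros Hs Hu. pose proof (ne0_comp s Hs).
  destruct s as [s1 s2], A as [b1 b2]. unfold Re, Im in *; simpl in *.
  apply CC_eq; unfold Csub, Cadd, Copp, Defs.C1, Cmul, Cdiv, Cinv, Cnorm2, RtoC, Re, Im; simpl;
  field; repeat split; auto; (replace (u * s1 * (u * s1) + u * s2 * (u * s2)) with ((u*u)*(s1*s1+s2*s2)) by ring;
    apply Rmult_integral_contrapositive_currified; auto;
    intro HH; apply Rmult_integral in HH; tauto).
Qed.

Lemma alg3 (t P E : CC) (p : R) : t <> C0 -> P <> C0 -> p <> 0 ->
  Cdiv (Cadd (Cmul (RtoC p) (Cmul t P)) E) t =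
  Cmul (Cmul (RtoC p) P) (Cadd Defs.C1 (Cdiv E (Cmul (RtoC p) (Cmul t P)))).
Proof.
  intros Ht HP Hp. pose proof (ne0_comp t Ht). pose proof (ne0_comp P HP).
  destruct t as [t1 t2], P as [P1 P2], E as [e1 e2]. unfold Re, Im in *; simpl in *.
  apply CC_eq; unfold Csub, Cadd, Copp, Defs.C1, Cmul, Cdiv, Cinv, Cnorm2, RtoC, Re, Im; simpl;
  field; repeat split; auto;
  (match goal with |- ?a <> 0 =>
     replace a with ((p*p)*((t1*t1+t2*t2)*(P1*P1+P2*P2))) by ring end;
    repeat (apply Rmult_integral_contrapositive_currified; auto);
    intro HH; apply Rmult_integral in HH; tauto).
Qed.

Lemma Arg_right z : 0 < Re z -> - (PI/2) < Arg z < PI/2.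
Proof.
  intros H. destruct z as [x y]; unfold Arg, Re, Im in *; simpl in *.
  destruct (Rlt_dec 0 x); [|lra]. pose proof (atan_bound (y/x)). lra.
Qed.

Lemma Rabs_bnd a b : Rabs a <= b -> -b <= a <= b.
Proof. split_Rabs; intros; lra. Qed.

Lemma Rabs_le_of a b : - b <= a <= b -> Rabs a <= b.
Proof. intros; apply Rabs_le; lra. Qed.

Lemma main_est (p c m phi : R) (t P : CC) :
  0 < p -> 0 < c <= 1 -> t <> C0 -> 0 < m -> P = (m * cos phi, m * sin phi) ->
  512 * (1 + p) * (Cabs t * m) <= c ->
  0 < Re (Csub Defs.C1 (Cmul t P)) /\ Rabs (p * Arg (Csub Defs.C1 (Cmul t P))) <= 1/2 /\
  exists lam psi, Rabs psi <= c /\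
    Cdiv (Csub Defs.C1 (cpowP (Csub Defs.C1 (Cmul t P)) p)) t = Cexp (lam, phi + psi).
Proof.
  intros Hp Hc Ht Hm HP He.
  set (e := Cabs t * m) in *.
  assert (He0 : 0 < e) by (unfold e; pose proof (Cabs_pos t Ht); nra).
  assert (Hpe : p * e <= 1/512) by nra.
  assert (He1 : e <= 1/512) by nra.
  set (T := Cmul t P).
  assert (HCP : Cabs P = m) by (rewrite HP; apply Cabs_polar; lra).
  assert (HT : Cabs T = e) by (unfold T; rewrite Cabs_mul, HCP; reflexivity).
  pose proof (Re_le_Cabs T) as HT1. pose proof (Im_le_Cabs T) as HT2. rewrite HT in HT1, HT2.
  set (Q := Csub Defs.C1 T).
  assert (HQ1 : Re Q = 1 - Re T) by (unfold Q, Csub, Cadd, Copp, Defs.C1, Re; simpl; ring).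
  assert (HQ2 : Im Q = - Im T) by (unfold Q, Csub, Cadd, Copp, Defs.C1, Im; simpl; ring).
  assert (HReQ : 0 < Re Q) by (rewrite HQ1; pose proof (Rabs_bnd _ _ HT1); lra).
  assert (HQ0 : Q <> C0).
  { intro E0. rewrite E0 in HReQ. unfold C0, Re in HReQ; simpl in HReQ. lra. }
  set (CQ := Cabs Q).
  assert (HCQ1 : 1 - e <= CQ).
  { pose proof (Re_le_Cabs Q). fold CQ in H. rewrite HQ1 in H. pose proof (Rabs_bnd _ _ HT1). pose proof (Rle_abs (1 - Re T)). lra. }
  assert (HCQ2 : CQ <= 1 + 2 * e).
  { pose proof (Cabs_le_sum Q). fold CQ in H. rewrite HQ1, HQ2, Rabs_Ropp in H.
    assert (Rabs (1 - Re T) <= 1 + e) by (apply Rabs_le; pose proof (Rabs_bnd _ _ HT1); lra). lra. }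
  assert (Hl1 : Rabs (ln CQ) <= 4 * e).
  { destruct (ln_bounds CQ) as [L1 L2]. lra.
    assert (/ CQ <= 1 + 2 * e).
    { assert (/ CQ * CQ = 1) by (field; lra). assert (0 < / CQ) by (apply Rinv_0_lt_compat; lra). nra. }
    apply Rabs_le_of; lra. }
  destruct (Arg_right Q HReQ) as [HA1 HA2].
  destruct (Arg_polar Q HQ0) as [_ HsinQ]. fold CQ in HsinQ.
  assert (Hl2 : Rabs (Arg Q) < 4 * e).
  { apply small_angle; [lra | lra |].
    assert (Rabs (CQ * sin (Arg Q)) <= e) by (rewrite HsinQ, HQ2, Rabs_Ropp; exact HT2).
    rewrite Rabs_mult, (Rabs_pos_eq CQ) in H by lra.
    pose proof (Rabs_pos (sin (Arg Q))). nra. }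
  split; [exact HReQ|]. split.
  { rewrite Rabs_mult, (Rabs_pos_eq p) by lra. nra. }
  set (l1 := ln CQ) in *. set (l2 := Arg Q) in *.
  assert (HQexp : Cexp (l1, l2) = Q) by (apply Cexp_Clog_princ; exact HQ0).
  assert (HE1 : exp l1 * cos l2 = 1 - Re T).
  { rewrite <- HQ1, <- HQexp. reflexivity. }
  assert (HE2 : exp l1 * sin l2 = - Im T).
  { rewrite <- HQ2, <- HQexp. reflexivity. }
  assert (Hcp : cpowP Q p = Cexp (p * l1, p * l2)).
  { unfold cpowP. rewrite Cmul_RtoC. reflexivity. }
  rewrite Hcp.
  set (r1 := exp l1 * cos l2 - 1 - l1). set (r2 := exp l1 * sin l2 - l2).
  set (s1 := exp (p*l1) * cos (p*l2) - 1 - p*l1). set (s2 := exp (p*l1) * sin (p*l2) - p*l2).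
  assert (Hn : l1*l1 + l2*l2 <= 32 * (e*e)).
  { assert (Rabs l1 * Rabs l1 <= (4*e)*(4*e)) by (apply Rmult_le_compat; auto using Rabs_pos; lra).
    assert (Rabs l2 * Rabs l2 <= (4*e)*(4*e)) by (apply Rmult_le_compat; auto using Rabs_pos; lra).
    rewrite <- !Rabs_mult, !Rabs_pos_eq in * by nra. lra. }
  assert (Hr1 : Rabs r1 <= 64 * (e*e)).
  { pose proof (Rem_re l1 l2 ltac:(lra) ltac:(lra)). unfold r1. lra. }
  assert (Hr2 : Rabs r2 <= 64 * (e*e)).
  { pose proof (Rem_im l1 l2 ltac:(lra) ltac:(lra)). unfold r2. lra. }
  assert (Hpl1 : Rabs (p*l1) <= 1/2) by (rewrite Rabs_mult, (Rabs_pos_eq p) by lra; nra).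
  assert (Hpl2 : Rabs (p*l2) <= 1/2) by (rewrite Rabs_mult, (Rabs_pos_eq p) by lra; nra).
  assert (Hs1 : Rabs s1 <= 64 * (p*p) * (e*e)).
  { pose proof (Rem_re (p*l1) (p*l2) Hpl1 Hpl2). unfold s1.
    assert (p*l1*(p*l1) + p*l2*(p*l2) = (p*p)*(l1*l1+l2*l2)) by ring.
    assert (0 <= p*p) by nra. nra. }
  assert (Hs2 : Rabs s2 <= 64 * (p*p) * (e*e)).
  { pose proof (Rem_im (p*l1) (p*l2) Hpl1 Hpl2). unfold s2.
    assert (p*l1*(p*l1) + p*l2*(p*l2) = (p*p)*(l1*l1+l2*l2)) by ring.
    assert (0 <= p*p) by nra. nra. }
  set (E := (p * r1 - s1, p * r2 - s2) : CC).
  assert (Hid : Csub Defs.C1 (Cexp (p * l1, p * l2)) = Cadd (Cmul (RtoC p) T) E).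
  { rewrite Cmul_RtoC.
    apply CC_eq; unfold Csub, Cadd, Copp, Defs.C1, Cexp, E, Re, Im in *; simpl in *;
    unfold r1, r2, s1, s2; nra. }
  rewrite Hid.
  assert (HP0 : P <> C0) by (rewrite HP; apply polar_ne0; lra).
  assert (Halg := alg3 t P E p Ht HP0 ltac:(lra)). fold T in Halg. rewrite Halg.
  set (D := Cdiv E (Cmul (RtoC p) T)).
  assert (HpT : Cmul (RtoC p) T <> C0).
  { intro Z. pose proof (Cabs_mul (RtoC p) T). rewrite Z, HT in H.
    unfold Cabs, Cnorm2, C0, RtoC, Re, Im in H; simpl in H.
    replace (0*0+0*0) with 0 in H by ring. replace (p*p+0*0) with (p*p) in H by ring.
    rewrite sqrt_0, sqrt_square in H by lra. nra. }
  set (eps := 128 * (1 + p) * e).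
  assert (HD : Cabs D <= eps).
  { unfold D. rewrite Cabs_div by exact HpT. rewrite Cabs_mul, HT.
    assert (Cabs (RtoC p) = p).
    { unfold Cabs, Cnorm2, RtoC, Re, Im; simpl. replace (p*p+0*0) with (p*p) by ring. apply sqrt_square; lra. }
    rewrite H.
    assert (HRe : Re E = p*r1 + - s1) by reflexivity.
    assert (HIm : Im E = p*r2 + - s2) by reflexivity.
    pose proof (Cabs_le_sum E). rewrite HRe, HIm in H0.
    pose proof (Rabs_triang (p*r1) (-s1)). pose proof (Rabs_triang (p*r2) (-s2)).
    rewrite Rabs_Ropp, Rabs_mult, (Rabs_pos_eq p) in H1, H2 by lra.
    assert (p*Rabs r1 <= p*(64*(e*e))) by (apply Rmult_le_compat_l; lra).
    assert (p*Rabs r2 <= p*(64*(e*e))) by (apply Rmult_le_compat_l; lra).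
    assert (Cabs E <= 128 * p * (1 + p) * (e * e)) by lra.
    unfold Rdiv. apply (Rmult_le_reg_r (p * e)). nra.
    rewrite Rmult_assoc, Rinv_l by nra. unfold eps. nra. }
  set (V := Cadd Defs.C1 D).
  assert (HV1 : Re V = 1 + Re D) by (unfold V, Cadd, Defs.C1, Re; simpl; ring).
  assert (HV2 : Im V = Im D) by (unfold V, Cadd, Defs.C1, Im; simpl; ring).
  pose proof (Re_le_Cabs D). pose proof (Im_le_Cabs D).
  assert (Heps : eps <= c / 4) by (unfold eps; lra).
  assert (HReV : 3/4 <= Re V) by (rewrite HV1; pose proof (Rabs_bnd _ _ H); lra).
  assert (HV0 : V <> C0).
  { intro Z. rewrite Z in HReV. unfold C0, Re in HReV; simpl in HReV. lra. }
  destruct (Arg_right V ltac:(lra)) as [HB1 HB2].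
  destruct (Arg_polar V HV0) as [_ HsinV].
  assert (HCV : 3/4 <= Cabs V) by (pose proof (Re_le_Cabs V); pose proof (Rle_abs (Re V)); lra).
  assert (Hpsi : Rabs (Arg V) < 4 * eps).
  { apply small_angle; [lra | unfold eps; split; nra |].
    assert (Rabs (Cabs V * sin (Arg V)) <= eps) by (rewrite HsinV, HV2; lra).
    rewrite Rabs_mult, (Rabs_pos_eq (Cabs V)) in H1 by lra.
    pose proof (Rabs_pos (sin (Arg V))). nra. }
  assert (HVexp : Cexp (Clog_princ V) = V) by (apply Cexp_Clog_princ; exact HV0).
  assert (HPexp : P = Cexp (ln m, phi)).
  { rewrite HP. unfold Cexp, Re, Im; simpl. rewrite exp_ln by lra. reflexivity. }
  exists (ln p + ln m + ln (Cabs V)), (Arg V). split. lra.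
  rewrite HPexp, scal_Cexp by lra.
  transitivity (Cmul (Cexp (ln p + Re (ln m, phi), Im (ln m, phi))) (Cexp (Clog_princ V))).
  f_equal; auto. rewrite Cexp_add. unfold Clog_princ, Re, Im; simpl. f_equal; f_equal; ring.
Qed.

Lemma Cabs_Copp q : Cabs (Copp q) = Cabs q.
Proof. unfold Cabs, Cnorm2, Copp, Re, Im; simpl. f_equal. ring. Qed.

Lemma Cinv_ne0 g : g <> C0 -> Cinv g <> C0.
Proof.
  intros H E. apply H. rewrite <- (Cinv_Cinv g H), E.
  unfold Cinv, C0, Cnorm2, Re, Im; simpl. apply CC_eq; unfold Re, Im; simpl; unfold Rdiv; ring.
Qed.

Theorem theorem3p1 (r u alpha eta : R) (s : CC) :
  0 < r -> 0 < u -> 0 < alpha -> alpha <= 2 -> 0 < eta -> s <> C0 ->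
  exists M : R, 0 < M /\
    forall z : CC, Gamma eta M z ->
      F_welldef alpha (Cmul (RtoC u) s) u z /\
      F_welldef alpha s r (F alpha (Cmul (RtoC u) s) u z) /\
      F_welldef alpha (Cmul (RtoC u) s) (u * r) z /\
      F alpha s r (F alpha (Cmul (RtoC u) s) u z) = F alpha (Cmul (RtoC u) s) (u * r) z.
Proof.
  intros Hr Hu Ha Ha2 Heta Hs.
  pose proof PI_RGT_0 as HPI.
  set (t := Cmul (RtoC u) s).
  assert (Ht : t <> C0).
  { intro Z. pose proof (Cabs_mul (RtoC u) s). fold t in H. rewrite Z in H.
    unfold Cabs at 1, Cnorm2, C0, Re, Im in H; simpl in H.
    replace (0*0+0*0) with 0 in H by ring. rewrite sqrt_0 in H.
    assert (Cabs (RtoC u) = u).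
    { unfold Cabs, Cnorm2, RtoC, Re, Im; simpl. replace (u*u+0*0) with (u*u) by ring. apply sqrt_square; lra. }
    rewrite H0 in H. pose proof (Cabs_pos s Hs). nra. }
  set (th0 := eta / (1 + eta)).
  assert (Hth0 : 0 < th0) by (unfold th0; apply Rdiv_lt_0_compat; lra).
  set (c := alpha * th0 / (1 + alpha * th0)).
  assert (Hc : 0 < c <= 1 /\ c <= alpha * th0).
  { unfold c. assert (0 < alpha * th0) by nra. split; [split|].
    apply Rdiv_lt_0_compat; lra.
    apply (Rmult_le_reg_r (1 + alpha*th0)); [lra|]. field_simplify; lra.
    apply (Rmult_le_reg_r (1 + alpha*th0)); [lra|]. field_simplify; nra. }
  set (p1 := 1 / u). set (p2 := 1 / (u * r)).
  assert (Hp1 : 0 < p1) by (unfold p1; apply Rdiv_lt_0_compat; lra).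
  assert (Hp2 : 0 < p2) by (unfold p2; apply Rdiv_lt_0_compat; nra).
  set (K := 1 + p1 + p2).
  set (At := Cabs t). assert (HAt : 0 < At) by (apply Cabs_pos; exact Ht).
  set (d0 := c / (512 * K * (1 + At))).
  assert (Hd0 : 0 < d0) by (unfold d0; apply Rdiv_lt_0_compat; [lra|]; unfold K; nra).
  exists (exp (- ln d0 / alpha)). split. apply exp_pos.
  intros z [HzM Hzeta].
  set (M := exp (- ln d0 / alpha)) in *.
  assert (HM : 0 < M) by apply exp_pos.
  assert (Hz0 : z <> C0).
  { intro Z. rewrite Z in HzM. unfold C0, Im in HzM; simpl in HzM. lra. }
  pose proof (Cnorm2_pos z Hz0) as Hn.
  set (w := G_w1 z).
  assert (Hw1 : Re w = - (Re z / Cnorm2 z)) by reflexivity.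
  assert (Hw2 : Im w = Im z / Cnorm2 z) by (unfold w, G_w1, Copp, Cinv, Im; simpl; field; lra).
  assert (HImw : 0 < Im w) by (rewrite Hw2; apply Rdiv_lt_0_compat; lra).
  assert (Hwe : eta * Rabs (Re w) < Im w).
  { rewrite Hw1, Hw2, Rabs_Ropp. unfold Rdiv. rewrite Rabs_mult.
    rewrite (Rabs_pos_eq (/ Cnorm2 z)) by (left; apply Rinv_0_lt_compat; lra).
    assert (0 < / Cnorm2 z) by (apply Rinv_0_lt_compat; lra). nra. }
  assert (Hw0 : w <> C0).
  { intro Z. rewrite Z in HImw. unfold C0, Im in HImw; simpl in HImw. lra. }
  assert (HCw : Cabs w = / Cabs z) by (unfold w, G_w1; rewrite Cabs_Copp, Cabs_inv; auto).
  assert (HCz : M < Cabs z) by (pose proof (Im_le_Cabs z); pose proof (Rle_abs (Im z)); lra).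
  set (beta := Arg w).
  destruct (Arg_polar w Hw0) as [Hpc Hps]. fold beta in Hpc, Hps.
  pose proof (Cabs_pos w Hw0) as HCw0.
  assert (Hsb : 0 < sin beta) by nra.
  assert (Hsbe : eta * Rabs (cos beta) < sin beta).
  { assert (Rabs (Re w) = Cabs w * Rabs (cos beta)) by (rewrite <- Hpc, Rabs_mult, Rabs_pos_eq by lra; reflexivity).
    rewrite H, <- Hps in Hwe. nra. }
  assert (Hsb1 : th0 < sin beta).
  { pose proof (sin2_cos2 beta). unfold Rsqr in H. pose proof (SIN_bound beta).
    assert (Rabs (cos beta) * Rabs (cos beta) = cos beta * cos beta) by (rewrite <- Rabs_mult; apply Rabs_pos_eq; nra).
    assert (Rabs (cos beta) <= 1) by (pose proof (COS_bound beta); apply Rabs_le; lra).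
    pose proof (Rabs_pos (cos beta)).
    assert (1 - Rabs (cos beta) <= sin beta) by nra.
    unfold th0. apply (Rmult_lt_reg_r (1 + eta)); [lra|]. field_simplify; nra. }
  pose proof (Arg_range w) as Hbr. fold beta in Hbr.
  assert (Hb0 : 0 < beta).
  { destruct (Rtotal_order beta 0) as [h|[h|h]]; auto.
    pose proof (sin_lt_0_var beta ltac:(lra) h); lra. rewrite h, sin_0 in Hsb; lra. }
  assert (Hbpi : beta < PI).
  { destruct (Req_dec beta PI). rewrite H, sin_PI in Hsb; lra. lra. }
  assert (Hbt0 : th0 < beta) by (pose proof (sin_le_id beta); lra).
  assert (Hbt1 : th0 < PI - beta) by (pose proof (sin_le_id (PI - beta)); rewrite sin_PI_x in H; lra).
  assert (Harg1w : arg1 w = beta) by (unfold arg1; fold beta; destruct (Rlt_dec 0 beta); lra).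
  set (m := exp (alpha * ln (Cabs w))).
  assert (Hm : 0 < m) by apply exp_pos.
  assert (HP : cpow1 w alpha = (m * cos (alpha * beta), m * sin (alpha * beta))).
  { unfold cpow1, Clog1. rewrite Harg1w, Cmul_RtoC. reflexivity. }
  assert (Hmd : m < d0).
  { unfold m. rewrite <- (exp_ln d0) by lra. apply exp_increasing.
    rewrite HCw, ln_Rinv by lra.
    assert (ln M < ln (Cabs z)) by (apply ln_increasing; lra).
    unfold M in H. rewrite ln_exp in H.
    apply (Rmult_lt_compat_l alpha) in H; [|lra].
    replace (alpha * (- ln d0 / alpha)) with (- ln d0) in H by (field; lra). lra. }
  assert (Hbound : forall p, 0 < p -> p <= p1 + p2 -> 512 * (1 + p) * (Cabs t * m) <= c).
  { intros p Hp Hpp.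
    assert (E : 512 * K * (1 + At) * d0 = c) by (unfold d0; field; unfold K; nra).
    fold At. assert (At * m <= (1 + At) * d0) by nra.
    assert (1 + p <= K) by (unfold K; lra).
    assert (0 <= At * m) by nra.
    assert (512 * (1+p) * (At * m) <= 512 * K * (At * m)) by nra.
    assert (512 * K * (At * m) <= 512 * K * ((1 + At) * d0)).
    { apply Rmult_le_compat_l; [unfold K; lra | lra]. }
    lra. }
  destruct Hc as [Hc Hcth].
  destruct (main_est p1 c m (alpha * beta) t (cpow1 w alpha) Hp1 Hc Ht Hm HP
              (Hbound p1 Hp1 ltac:(lra))) as [HReQ [HArgQ [lam1 [psi1 [Hpsi1 HX1]]]]].
  destruct (main_est p2 c m (alpha * beta) t (cpow1 w alpha) Hp2 Hc Ht Hm HP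
              (Hbound p2 Hp2 ltac:(lra))) as [_ [_ [lam2 [psi2 [Hpsi2 HX2]]]]].
  set (Q := G_w2 alpha t z).
  change (Csub Defs.C1 (Cmul t (cpow1 w alpha))) with Q in HReQ, HArgQ, HX1, HX2.
  change (Cdiv (Csub Defs.C1 (cpowP Q p1)) t) with (G_w3 alpha u t z) in HX1.
  change (Cdiv (Csub Defs.C1 (cpowP Q p2)) t) with (G_w3 alpha (u * r) t z) in HX2.
  set (th1 := alpha * beta + psi1) in *. set (th2 := alpha * beta + psi2) in *.
  assert (Hab1 : alpha * th0 < alpha * beta) by (apply Rmult_lt_compat_l; lra).
  assert (Hab2 : alpha * beta + alpha * th0 < alpha * PI).
  { rewrite <- Rmult_plus_distr_l. apply Rmult_lt_compat_l; lra. }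
  assert (Hth1 : 0 < th1 < alpha * PI) by (unfold th1; pose proof (Rabs_bnd _ _ Hpsi1); lra).
  assert (Hth2 : 0 < th2 < alpha * PI) by (unfold th2; pose proof (Rabs_bnd _ _ Hpsi2); lra).
  assert (Hth1' : 0 < th1 < 2 * PI) by nra.
  assert (Hth2' : 0 < th2 < 2 * PI) by nra.
  assert (Hth1a : 0 < 1 / alpha * th1 < 2 * PI).
  { split. apply Rmult_lt_0_compat; [apply Rdiv_lt_0_compat|]; lra.
    apply (Rmult_lt_reg_l alpha); [lra|]. field_simplify; nra. }
  assert (Hth2a : 0 < 1 / alpha * th2 < 2 * PI).
  { split. apply Rmult_lt_0_compat; [apply Rdiv_lt_0_compat|]; lra.
    apply (Rmult_lt_reg_l alpha); [lra|]. field_simplify; nra. }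
  set (cu := Rpower u (1 / alpha)). set (cr := Rpower r (1 / alpha)). set (cur := Rpower (u * r) (1 / alpha)).
  assert (Hcu : 0 < cu) by (unfold cu, Rpower; apply exp_pos).
  assert (Hcr : 0 < cr) by (unfold cr, Rpower; apply exp_pos).
  assert (Hcur : 0 < cur) by (unfold cur, Rpower; apply exp_pos).
  set (v1 := (ln cu + 1 / alpha * lam1, 1 / alpha * th1) : CC).
  assert (HG1 : G alpha t u z = Copp (Cexp v1)).
  { unfold G. fold cu. rewrite HX1, cpow1_Cexp by exact Hth1'. rewrite scal_Cexp by exact Hcu. reflexivity. }
  set (F1 := F alpha t u z).
  assert (HW1 : G_w1 F1 = Cexp v1).
  { unfold F1, F, G_w1. rewrite HG1, Cinv_Cinv by apply Copp_Cexp_ne0. apply Copp_Copp. }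
  assert (Hcp1 : cpow1 (Cexp v1) alpha = Cmul (RtoC u) (G_w3 alpha u t z)).
  { rewrite cpow1_Cexp by exact Hth1a. rewrite HX1, scal_Cexp by lra.
    unfold v1, Re, Im; simpl. unfold cu. rewrite ln_Rpower. f_equal. f_equal; field; lra. }
  assert (HW2 : G_w2 alpha s F1 = cpowP Q p1).
  { unfold G_w2 at 1. rewrite HW1, Hcp1. unfold G_w3. apply alg1; auto; lra. }
  set (vR := (p1 * ln (Cabs Q), p1 * Arg Q) : CC).
  assert (LQ : cpowP Q p1 = Cexp vR) by (unfold cpowP; rewrite Cmul_RtoC; reflexivity).
  assert (HvR : Rabs (Im vR) <= 1/2) by exact HArgQ.
  assert (HW3 : G_w3 alpha r s F1 = Cexp (ln u + lam2, th2)).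
  { unfold G_w3 at 1. rewrite HW2, LQ, cpowP_Cexp.
    2: { pose proof PI2_1. pose proof (Rabs_bnd _ _ HvR); lra. }
    assert (Cexp (1 / r * Re vR, 1 / r * Im vR) = cpowP Q p2).
    { unfold cpowP. rewrite Cmul_RtoC. unfold vR, p1, p2, Re, Im; simpl. f_equal. f_equal; field; lra. }
    rewrite H. rewrite (alg2 s _ u) by (auto; lra). fold t.
    change (Cdiv (Csub Defs.C1 (cpowP Q p2)) t) with (G_w3 alpha (u * r) t z).
    rewrite HX2, scal_Cexp by lra. reflexivity. }
  assert (HG2 : G alpha s r F1 = Copp (Cexp (ln cr + 1 / alpha * (ln u + lam2), 1 / alpha * th2))).
  { unfold G. fold cr. rewrite HW3, cpow1_Cexp by exact Hth2'. rewrite scal_Cexp by exact Hcr. reflexivity. }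
  assert (HG3 : G alpha t (u * r) z = Copp (Cexp (ln cur + 1 / alpha * lam2, 1 / alpha * th2))).
  { unfold G. fold cur. rewrite HX2, cpow1_Cexp by exact Hth2'. rewrite scal_Cexp by exact Hcur. reflexivity. }
  assert (Hwn : not_in_nonneg_axis w) by (intros [h _]; lra).
  assert (HQn : not_in_nonpos_axis Q) by (intros [_ h]; lra).
  split; [|split; [|split]].
  - unfold F_welldef. split; [exact Hz0|]. split; [exact Hwn|]. split; [exact HQn|]. split.
    + rewrite HX1. apply Cexp_not_nonneg. exact Hth1'.
    + rewrite HG1. apply Copp_Cexp_ne0.
  - unfold F_welldef. split; [|split; [|split; [|split]]].
    + apply Cinv_ne0. fold (G alpha t u z). rewrite HG1. apply Copp_Cexp_ne0.
    + rewrite HW1. apply Cexp_not_nonneg. exact Hth1a.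
    + rewrite HW2, LQ. apply Cexp_not_nonpos. exact HvR.
    + rewrite HW3. apply Cexp_not_nonneg. exact Hth2'.
    + rewrite HG2. apply Copp_Cexp_ne0.
  - unfold F_welldef. split; [exact Hz0|]. split; [exact Hwn|]. split; [exact HQn|]. split.
    + rewrite HX2. apply Cexp_not_nonneg. exact Hth2'.
    + rewrite HG3. apply Copp_Cexp_ne0.
  - fold F1. unfold F. rewrite HG2, HG3.
    replace (ln cr + 1 / alpha * (ln u + lam2)) with (ln cur + 1 / alpha * lam2). reflexivity.
    unfold cr, cur. rewrite !ln_Rpower, ln_mult by lra. field. lra.
Qed.
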